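(* Let $a_1,a_2,a_3\in\mathbb{R}\setminus\{0\}$ and consider the connection $$\nabla=d-\Big(A_1\frac{dz}{z}+A_2\frac{dw}{w}+A_3\frac{d(z-w)}{z-w}\Big),$$ $$A_1=\begin{pmatrix}a_1&0\\ \frac{a_1+a_3-a_2}{2}&0\end{pmatrix},\quad A_2=\begin{pmatrix}0&\frac{a_2+a_3-a_1}{2}\\0&a_2\end{pmatrix},\quad A_3=\begin{pmatrix}\frac{a_2+a_3-a_1}{2}&\frac{a_1-a_2-a_3}{2}\\ \frac{a_2-a_1-a_3}{2}&\frac{a_1+a_3-a_2}{2}\end{pmatrix}$$ on the tangent bundle of $\mathbb{C}^2\setminus(\{z=0\}\cup\{w=0\}\cup\{w=z\})$ (in the frame $\partial_z,\partial_w$). Then $\nabla$ is Dunkl if and only if $|a_i|<|a_j|+|a_k|$ for all $(i,j,k)$ running over cyclic permutations of $(1,2,3)$.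
   Context: A connection of this form is Dunkl if there exists a positive definite Hermitian inner product on $\mathbb{C}^2$ with respect to which each of the residue matrices $A_1,A_2,A_3$ is self-adjoint. *)

(* Defs.v *)
From HB Require Import structures.
From mathcomp Require Import all_boot all_order all_algebra.
From mathcomp Require Import complex.
From mathcomp Require Import Rstruct.
From Stdlib Require Rdefinitions.
Set Implicit Arguments. Unset Strict Implicit. Unset Printing Implicit Defensive.
Import Order.TTheory GRing.Theory Num.Theory.
Local Open Scope ring_scope.

Notation CC := (Rdefinitions.R[i]).
Notation vec := 'cV[CC]_2.

Definition hermitian_inner_product (h : vec -> vec -> CC) : Prop :=
  [/\ (forall (c : CC) (u v w : vec), h (c *: u + v) w = c * h u w + h v w),
      (forall u v : vec, h v u = conjc (h u v)) &
      (forall u : vec, u != 0 -> 0 < h u u)].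

Definition self_adjoint (h : vec -> vec -> CC) (A : 'M[CC]_2) : Prop :=
  forall u v : vec, h (A *m u) v = h u (A *m v).

Definition rC (x : Rdefinitions.R) : CC := (x%:C)%C.

Definition A1 (a1 a2 a3 : Rdefinitions.R) : 'M[CC]_2 :=
  \matrix_(i < 2, j < 2)
    rC (if (val i == 0%N) && (val j == 0%N) then a1
        else if (val i == 1%N) && (val j == 0%N) then (a1 + a3 - a2) / 2
        else 0).

Definition A2 (a1 a2 a3 : Rdefinitions.R) : 'M[CC]_2 :=
  \matrix_(i < 2, j < 2)
    rC (if (val i == 0%N) && (val j == 1%N) then (a2 + a3 - a1) / 2
        else if (val i == 1%N) && (val j == 1%N) then a2
        else 0).

Definition A3 (a1 a2 a3 : Rdefinitions.R) : 'M[CC]_2 :=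
  \matrix_(i < 2, j < 2)
    rC (if (val i == 0%N) && (val j == 0%N) then (a2 + a3 - a1) / 2
        else if (val i == 0%N) && (val j == 1%N) then (a1 - a2 - a3) / 2
        else if (val i == 1%N) && (val j == 0%N) then (a2 - a1 - a3) / 2
        else (a1 + a3 - a2) / 2).

(* The connection d - (A1 dz/z + A2 dw/w + A3 d(z-w)/(z-w)) is Dunkl iff there
   is a positive definite Hermitian inner product on C^2 for which each residue
   matrix is self-adjoint. *)
Definition Dunkl (A1 A2 A3 : 'M[CC]_2) : Prop :=
  exists h, hermitian_inner_product h /\
    [/\ self_adjoint h A1, self_adjoint h A2 & self_adjoint h A3].

(* Main.v *)
Require Import Defs.
From HB Require Import structures.
From mathcomp Require Import all_boot all_order all_algebra.
From mathcomp Require Import complex Rstruct.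
From Stdlib Require Rdefinitions.
From mathcomp Require Import ring lra.
Import Order.TTheory GRing.Theory Num.Theory.
Local Open Scope ring_scope.
Local Notation RR := Rdefinitions.R.

Lemma rC0 : rC 0 = 0. Proof. reflexivity. Qed.
Lemma ceq0 (x y : RR) : (x +i* y)%C = 0 :> CC -> x = 0 /\ y = 0.
Proof. move=> E. split. exact: (congr1 (@complex.Re RR) E). exact: (congr1 (@complex.Im RR) E). Qed.
Lemma rC_gt0 k : 0 < rC k -> 0 < k.
Proof. by rewrite ltcE /= => /andP[]. Qed.
Lemma rCgt k : 0 < k -> 0 < rC k.
Proof. by rewrite /rC ltcR. Qed.
Lemma conj_rC k : conjc (rC k) = rC k. Proof. exact: conjc_real. Qed.
Lemma rC_inj : injective rC. Proof. exact: complexI. Qed.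

Definition i0 : 'I_2 := @Ordinal 2 0 isT.
Definition i1 : 'I_2 := @Ordinal 2 1 isT.
Definition mk (x y : CC) : vec := \col_(i < 2) (if val i == 0%N then x else y).

Lemma mxcase (P : 'I_2 -> Prop) : P i0 -> P i1 -> forall i, P i.
Proof.
move=> H0 H1 [[|[|i]] Hi] //.
- by rewrite (_ : Ordinal Hi = i0) //; apply: val_inj.
- by rewrite (_ : Ordinal Hi = i1) //; apply: val_inj.
Qed.

Lemma ord1_0 (j : 'I_1) : j = ord0.
Proof. by apply: val_inj; case: j => [[|]]. Qed.

Lemma mulmx_mk (A : 'M[CC]_2) x y :
  A *m mk x y = mk (A i0 i0 * x + A i0 i1 * y) (A i1 i0 * x + A i1 i1 * y).
Proof.
apply/matrixP => i j; rewrite !mxE !big_ord_recl big_ord0 addr0 !mxE /=.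
have -> : lift ord0 ord0 = i1 by apply: val_inj.
have -> : (ord0 : 'I_2) = i0 by apply: val_inj.
by elim/mxcase: i.
Qed.

Lemma vec_mk (u : vec) : u = mk (u i0 ord0) (u i1 ord0).
Proof.
apply/matrixP => i j; rewrite !mxE (ord1_0 j).
by elim/mxcase: i.
Qed.

Lemma mk_eq0 x y : mk x y = 0 -> x = 0 /\ y = 0.
Proof.
move=> E; split.
- by have := congr1 (fun M : vec => M i0 ord0) E; rewrite !mxE.
- by have := congr1 (fun M : vec => M i1 ord0) E; rewrite !mxE.
Qed.

Lemma mk00 : mk 0 0 = 0.
Proof. by apply/matrixP => i j; rewrite !mxE; case: ifP. Qed.

Lemma mk_dec x y : mk x y = x *: mk 1 0 + y *: mk 0 1.
Proof.
apply/matrixP => i j; rewrite !mxE.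
elim/mxcase: i => /=; rewrite ?mulr1 ?mulr0 ?addr0 ?add0r //.
Qed.
Lemma conjD (x y : CC) : conjc (x + y) = conjc x + conjc y. Proof. exact: rmorphD. Qed.
Lemma conjM (x y : CC) : conjc (x * y) = conjc x * conjc y. Proof. exact: rmorphM. Qed.
Lemma conjK (x : CC) : conjc (conjc x) = x. Proof. exact: conjcK. Qed.

Lemma entryDZ (c : CC) (u v : vec) i j : (c *: u + v) i j = c * u i j + v i j.
Proof. by rewrite !mxE. Qed.

Definition hB (p q r : RR) (u v : vec) : CC :=
  rC p * u i0 ord0 * conjc (v i0 ord0)
  + rC q * (u i1 ord0 * conjc (v i0 ord0) + u i0 ord0 * conjc (v i1 ord0))
  + rC r * u i1 ord0 * conjc (v i1 ord0).

Lemma hB_mk p q r x y x' y' : hB p q r (mk x y) (mk x' y') =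
  rC p * x * conjc x' + rC q * (y * conjc x' + x * conjc y') + rC r * y * conjc y'.
Proof. by rewrite /hB !mxE. Qed.

Lemma pos_form (p q r x1 x2 y1 y2 : RR) : 0 < p -> 0 < r -> q^+2 < p * r ->
  0 < x1^+2 + x2^+2 + y1^+2 + y2^+2 ->
  0 < p * (x1^+2 + x2^+2) + 2 * q * (x1 * y1 + x2 * y2) + r * (y1^+2 + y2^+2).
Proof.
move=> hp hr hpr hs.
set F := _ + _ + _.
have id : p * F = (p * x1 + q * y1)^+2 + (p * x2 + q * y2)^+2 + (p * r - q^+2) * (y1^+2 + y2^+2)
  by rewrite /F; ring.
have [hy|hy] := eqVneq (y1^+2 + y2^+2) 0.
- move/eqP: hy; rewrite paddr_eq0 ?sqr_ge0 // !sqrf_eq0 => /andP[/eqP y10 /eqP y20].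
  move: hs; rewrite /F y10 y20 !(expr0n, mulr0, mul0r, addr0) /= => hs.
  by apply: mulr_gt0.
- have hy' : 0 < y1^+2 + y2^+2 by rewrite lt_def hy /= addr_ge0 // sqr_ge0.
  have : 0 < p * F.
    rewrite id; apply: ltr_wpDl; first by rewrite addr_ge0 // sqr_ge0.
    by apply: mulr_gt0 => //; rewrite subr_gt0.
  by rewrite pmulr_rgt0.
Qed.

Lemma hB_herm (p q r : RR) : 0 < p -> 0 < r -> q^+2 < p * r -> hermitian_inner_product (hB p q r).
Proof.
move=> hp hr hpr; split.
- move=> c u v w; rewrite /hB !entryDZ; ring.
- move=> u v; rewrite /hB !(conjD, conjM, conj_rC, conjK); ring.
- move=> u; rewrite (vec_mk u) hB_mk.
  case: (u i0 ord0) => x1 x2; case: (u i1 ord0) => y1 y2 unz.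
  rewrite /rC /=.
  simpc; apply/andP; split; first by apply/eqP; ring.
  have hs : 0 < x1^+2 + x2^+2 + y1^+2 + y2^+2.
    rewrite lt_def; apply/andP; split; last by rewrite !addr_ge0 // sqr_ge0.
    apply/negP => /eqP E; move/negP: unz; apply.
    have s0 : forall a b : RR, 0 <= a -> 0 <= b -> a + b = 0 -> a = 0 /\ b = 0.
      by move=> a b ha hb /eqP; rewrite paddr_eq0 // => /andP[/eqP -> /eqP ->].
    have [E1 E2] := s0 _ _ (addr_ge0 (addr_ge0 (sqr_ge0 x1) (sqr_ge0 x2)) (sqr_ge0 y1)) (sqr_ge0 y2) E.
    have [E3 E4] := s0 _ _ (addr_ge0 (sqr_ge0 x1) (sqr_ge0 x2)) (sqr_ge0 y1) E1.
    have [E5 E6] := s0 _ _ (sqr_ge0 x1) (sqr_ge0 x2) E3.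
    move/eqP: E2; move/eqP: E4; move/eqP: E5; move/eqP: E6; rewrite !sqrf_eq0.
    move=> /eqP -> /eqP -> /eqP -> /eqP ->.
    by rewrite -mk00.
  have := @pos_form p q r x1 x2 y1 y2 hp hr hpr hs.
  set F := (X in 0 < X -> _); set G := (X in _ -> 0 < X).
  by have -> : G = F by rewrite /F /G; ring.
Qed.

Lemma hB_sa (p q r m00 m01 m10 m11 : RR) (A : 'M[CC]_2) :
  A i0 i0 = rC m00 -> A i0 i1 = rC m01 -> A i1 i0 = rC m10 -> A i1 i1 = rC m11 ->
  p * m01 + q * m11 - q * m00 - r * m10 = 0 ->
  self_adjoint (hB p q r) A.
Proof.
move=> e00 e01 e10 e11 Ed u v.
rewrite (vec_mk u) (vec_mk v) !mulmx_mk !hB_mk e00 e01 e10 e11 !(conjD, conjM, conj_rC).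
apply/eqP; rewrite -subr_eq0; apply/eqP.
transitivity (rC (p * m01 + q * m11 - q * m00 - r * m10) *
   (u i1 ord0 * conjc (v i0 ord0) - u i0 ord0 * conjc (v i1 ord0))); first by ring.
by rewrite Ed rC0 mul0r.
Qed.

Lemma fwd_h (h : vec -> vec -> CC) (a1 a2 c1 c2 : RR) (A B : 'M[CC]_2) :
  hermitian_inner_product h ->
  A i0 i0 = rC a1 -> A i0 i1 = 0 -> A i1 i0 = rC c1 -> A i1 i1 = 0 -> self_adjoint h A ->
  B i0 i0 = 0 -> B i0 i1 = rC c2 -> B i1 i0 = 0 -> B i1 i1 = rC a2 -> self_adjoint h B ->
  a2 != 0 ->
  exists p q r : RR, [/\ 0 < p, 0 < r, q^+2 < p * r, a1 * q + c1 * r = 0 & c2 * p + a2 * q = 0].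
Proof.
case=> lin sym pos eA00 eA01 eA10 eA11 saA eB00 eB01 eB10 eB11 saB a2n.
have h0 : forall w, h 0 w = 0.
  move=> w; have := lin 1 0 0 w; rewrite scaler0 addr0 mul1r => E.
  by apply: (@addrI _ (h 0 w)); rewrite -E addr0.
have hZ : forall x u w, h (x *: u) w = x * h u w.
  by move=> x u w; have := lin x u 0 w; rewrite addr0 h0 addr0.
have hD : forall u v w, h (u + v) w = h u w + h v w.
  by move=> u v w; have := lin 1 u v w; rewrite scale1r mul1r.
set e1 := mk 1 0; set e2 := mk 0 1.
have hmk : forall x y w, h (mk x y) w = x * h e1 w + y * h e2 w.
  by move=> x y w; rewrite mk_dec hD !hZ.
have hw0 : forall u, h u 0 = 0.
  by move=> u; rewrite sym h0; exact: conjc0.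
have E1 : rC a1 * h e1 e2 + rC c1 * h e2 e2 = 0.
  have := saA e1 e2; rewrite /e1 /e2 !mulmx_mk eA00 eA01 eA10 eA11.
  rewrite !(mulr1, mulr0, mul0r, addr0, add0r) mk00 hw0 hmk.
  by rewrite -/e1 -/e2.
have E2 : rC c2 * h e1 e1 + rC a2 * h e2 e1 = 0.
  have := saB e2 e1; rewrite /e1 /e2 !mulmx_mk eB00 eB01 eB10 eB11.
  rewrite !(mulr1, mulr0, mul0r, addr0, add0r) mk00 hw0 hmk.
  by rewrite -/e1 -/e2.
have e1n : e1 != 0 by apply/negP => /eqP /mk_eq0 [/eqP]; rewrite oner_eq0.
have e2n : e2 != 0 by apply/negP => /eqP /mk_eq0 [_ /eqP]; rewrite oner_eq0.
have P := pos _ e1n; have Rp := pos _ e2n.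
have sQ := sym e2 e1.
case EP: (h e1 e1) P E2 => [p py] P E2.
case ER: (h e2 e2) Rp E1 => [r ry] Rp E1.
case EQ: (h e2 e1) sQ E2 => [qx qy] sQ E2.
rewrite sQ in E1.
move: P; rewrite ltcE /= => /andP[/eqP py0 p0].
move: Rp; rewrite ltcE /= => /andP[/eqP ry0 r0].
rewrite py0 in EP E2; rewrite ry0 in ER E1.
have qy0 : qy = 0.
  move: E2; rewrite /rC /=; simpc => /ceq0 [_ Ei].
  by move/eqP: Ei; rewrite mulf_eq0 (negPf a2n) => /eqP.
rewrite qy0 in EQ E1 E2.
have EP' : h e1 e1 = rC p := EP.
have ER' : h e2 e2 = rC r := ER.
have EQ' : h e2 e1 = rC qx := EQ.
have E1' : rC a1 * conjc (rC qx) + rC c1 * rC r = 0 := E1.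
have E2' : rC c2 * rC p + rC a2 * rC qx = 0 := E2.
rewrite conj_rC in E1'.
have F1 : a1 * qx + c1 * r = 0 by apply: rC_inj; rewrite rC0 -E1'; ring.
have F2 : c2 * p + a2 * qx = 0 by apply: rC_inj; rewrite rC0 -E2'; ring.
exists p, qx, r; split => //.
have un : mk (rC qx) (rC (- p)) != 0.
  apply/negP => /eqP /mk_eq0 [_]; rewrite -rC0 => /rC_inj /eqP.
  by rewrite oppr_eq0 (gt_eqF p0).
have := pos _ un.
rewrite (hmk _ _ (mk _ _)) (sym _ e1) (sym _ e2) (hmk _ _ e1) (hmk _ _ e2) EP' ER' EQ' (sym e2 e1) EQ' !(conjD, conjM, conj_rC).
have -> : rC qx * (rC qx * rC p + rC (- p) * rC qx) + rC (- p) * (rC qx * rC qx + rC (- p) * rC r)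
  = rC (p * (p * r - qx^+2)) by ring.
move/rC_gt0; rewrite pmulr_rgt0 // subr_gt0 //.
Qed.
Lemma tri_iff (a1 a2 a3 : RR) : a1 != 0 -> a2 != 0 -> a3 != 0 ->
  ([/\ `|a1| < `|a2| + `|a3|, `|a2| < `|a3| + `|a1| & `|a3| < `|a1| + `|a2|] <->
   ((a1 - a2)^+2 < a3^+2 /\ a3^+2 < (a1+a2)^+2 /\ 0 < a1 * a2) \/
   ((a1 + a2)^+2 < a3^+2 /\ a3^+2 < (a1-a2)^+2 /\ a1 * a2 < 0)).
Proof.
move=> h1 h2 h3.
have s1 := h1; have s2 := h2; have s3 := h3.
rewrite neq_lt in s1; rewrite neq_lt in s2; rewrite neq_lt in s3.
case/orP: s1 => s1; case/orP: s2 => s2; case/orP: s3 => s3;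
rewrite ?(ltr0_norm s1) ?(gtr0_norm s1) ?(ltr0_norm s2) ?(gtr0_norm s2)
  ?(ltr0_norm s3) ?(gtr0_norm s3);
(split; [case=> t1 t2 t3 | case=> [[u1 [u2 u3]]|[u1 [u2 u3]]]]);
try (first [left; split; [nra|split; nra] | right; split; [nra|split;nra]]);
try (split; nra); try nra.
Qed.
Lemma fwd_real (a1 a2 a3 c1 c2 p q r : RR) : a1 != 0 -> a2 != 0 -> a3 != 0 ->
  c1 + c2 = a3 -> c1 - c2 = a1 - a2 ->
  0 < p -> 0 < r -> q^+2 < p * r -> a1 * q + c1 * r = 0 -> c2 * p + a2 * q = 0 ->
  ((a1 - a2)^+2 < a3^+2 /\ a3^+2 < (a1+a2)^+2 /\ 0 < a1 * a2) \/
   ((a1 + a2)^+2 < a3^+2 /\ a3^+2 < (a1-a2)^+2 /\ a1 * a2 < 0).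
Proof.
move=> h1 h2 h3 e1 e2 hp hr hpr E1 E2.
have hq : q != 0.
  apply/eqP=> q0; move: E1 E2; rewrite q0 !mulr0 !add0r addr0 => /eqP E1 /eqP E2.
  move: E1 E2; rewrite !mulf_eq0 !(gt_eqF hp) !(gt_eqF hr) !orbF => /eqP c10 /eqP c20.
  by move: h3; rewrite -e1 c10 c20 addr0 eqxx.
have q2 : 0 < q^+2 by rewrite exprn_even_gt0 //=.
have key : (c1 * c2) * (p * r) = (a1 * a2) * q^+2.
  have -> : c1 * c2 * (p * r) = (c1 * r) * (c2 * p) by ring.
  have -> : c1 * r = - (a1 * q) by apply/eqP; rewrite -addr_eq0 addrC E1.
  have -> : c2 * p = - (a2 * q) by apply/eqP; rewrite -addr_eq0 E2.
  ring.
have h4 : 4 * (c1 * c2) = a3^+2 - (a1 - a2)^+2 by rewrite -e1 -e2; ring.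
have pr0 : 0 < p * r by exact: mulr_gt0.
case: (ltrgt0P (c1 * c2)) => hc.
- left.
  have : c1 * c2 < a1 * a2.
    have : (c1 * c2) * q^+2 < (c1 * c2) * (p * r) by rewrite ltr_pM2l.
    by rewrite key ltr_pM2r.
  move=> hh; split; [nra | split; nra].
- right.
  have : a1 * a2 < c1 * c2.
    have : (c1 * c2) * (p * r) < (c1 * c2) * q^+2 by rewrite ltr_nM2l.
    by rewrite key ltr_pM2r.
  move=> hh; split; [nra | split; nra].
- exfalso; have : a1 * a2 * q^+2 = 0 by rewrite -key hc; ring.
  apply/eqP; rewrite !mulf_eq0 (negPf h1) (negPf h2) /=.
  by rewrite (negPf hq).
Qed.

Lemma bwd_real (a1 a2 a3 c1 c2 : RR) :
  c1 + c2 = a3 -> c1 - c2 = a1 - a2 ->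
  (((a1 - a2)^+2 < a3^+2 /\ a3^+2 < (a1+a2)^+2 /\ 0 < a1 * a2) \/
   ((a1 + a2)^+2 < a3^+2 /\ a3^+2 < (a1-a2)^+2 /\ a1 * a2 < 0)) ->
  let p := (a2 * c1)^+2 in let r := a1 * a2 * c1 * c2 in let q := - (a2 * c1^+2 * c2) in
  [/\ 0 < p, 0 < r & q^+2 < p * r].
Proof.
move=> e1 e2 H p r q.
have h4 : 4 * (c1 * c2) = a3^+2 - (a1 - a2)^+2 by rewrite -e1 -e2; ring.
have h5 : 4 * (a1 * a2) = (a1 + a2)^+2 - (a1 - a2)^+2 by ring.
have [K1 K2] : 0 < (c1 * c2) * (a1 * a2) /\ 0 < (c1 * c2) * (a1 * a2 - c1 * c2).
  by case: H => [[u1 [u2 u3]]|[u1 [u2 u3]]]; split; nra.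
have c1n : c1 != 0 by apply/eqP=> c0; move: K1; rewrite c0 !(mulr0, mul0r) ltxx.
have a2n : a2 != 0 by apply/eqP=> c0; move: K1; rewrite c0 !(mulr0, mul0r) ltxx.
have P : 0 < p by rewrite /p exprn_even_gt0 //= mulf_neq0.
split => //.
- by rewrite /r; nra.
- rewrite -subr_gt0.
  have -> : p * r - q^+2 = (a2 * c1)^+2 * ((c1 * c2) * (a1 * a2 - c1 * c2)) by rewrite /p /r /q; ring.
  by apply: mulr_gt0.
Qed.

Theorem lemma27 (a1 a2 a3 : Rdefinitions.R) :
  a1 != 0 -> a2 != 0 -> a3 != 0 ->
  (Dunkl (A1 a1 a2 a3) (A2 a1 a2 a3) (A3 a1 a2 a3) <->
   [/\ `|a1| < `|a2| + `|a3|, `|a2| < `|a3| + `|a1| & `|a3| < `|a1| + `|a2|]).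
Proof.
move=> h1 h2 h3.
rewrite (@tri_iff a1 a2 a3 h1 h2 h3).
set c1 := (a1 + a3 - a2) / 2; set c2 := (a2 + a3 - a1) / 2.
have e1 : c1 + c2 = a3 by rewrite /c1 /c2; lra.
have e2 : c1 - c2 = a1 - a2 by rewrite /c1 /c2; lra.
split.
- case=> h [hh [s1 s2 _]].
  have [p [q [r [hp hr hpr F1 F2]]]] :=
    @fwd_h h a1 a2 c1 c2 (A1 a1 a2 a3) (A2 a1 a2 a3) hh
      (ltac:(by rewrite mxE)) (ltac:(by rewrite mxE)) (ltac:(by rewrite mxE))
      (ltac:(by rewrite mxE)) s1
      (ltac:(by rewrite mxE)) (ltac:(by rewrite mxE)) (ltac:(by rewrite mxE))
      (ltac:(by rewrite mxE)) s2 h2.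
  exact: (@fwd_real a1 a2 a3 c1 c2 p q r h1 h2 h3 e1 e2 hp hr hpr F1 F2).
- move=> H.
  have := @bwd_real a1 a2 a3 c1 c2 e1 e2 H.
  set p := (a2 * c1)^+2; set r := a1 * a2 * c1 * c2; set q := - (a2 * c1^+2 * c2).
  move=> /= [hp hr hpr].
  exists (hB p q r); split; first exact: hB_herm.
  split.
  + apply: (@hB_sa p q r a1 0 c1 0); rewrite ?mxE //.
    by rewrite /p /q /r; ring.
  + apply: (@hB_sa p q r 0 c2 0 a2); rewrite ?mxE //.
    by rewrite /p /q /r; ring.
  + apply: (@hB_sa p q r c2 (- c2) (- c1) c1); rewrite ?mxE /=; try (congr rC; rewrite /c1 /c2; lra).
    have -> : p * - c2 + q * c1 - q * c2 - r * - c1 = a2 * c1^+2 * c2 * ((a1 - a2) - (c1 - c2))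
      by rewrite /p /q /r; ring.
    by rewrite e2 subrr mulr0.
Qed.
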